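(* Let $\Pi = (\mathcal{A}, \mathcal{E}, \mathcal{R})$ be an epistemic logic program and let $\Pi' = (\mathcal{A}, \mathcal{E}', \mathcal{R})$ be an epistemic logic program with the same set of rules and the same set of atoms, but with $\mathcal{E}' \supset \mathcal{E}$ and $\mathcal{E}' \setminus \mathcal{E} = \{ \mathbf{not}\, \ell \}$ for a single epistemic literal $\mathbf{not}\,\ell$. Then $\mathrm{CWV}(\Pi) = \mathrm{CWV}(\Pi')$.
   Context: A literal over a set of propositional atoms $\mathcal{A}$ is an atom $a$ or its default negation $\neg a$. An interpretation is a set $I\subseteq\mathcal{A}$; $I\models a$ iff $a\in I$, $I\models \neg \ell$ iff $I\not\models \ell$, extended to sets of literals conjunctively. A (plain) logic program is a pair $(\mathcal{A},\mathcal{R})$ with rules $a_1\vee\cdots\vee a_l \leftarrow a_{l+1},\ldots,a_m,\neg\ell_1,\ldots,\neg\ell_n$ ($a_i$ atoms, $\ell_i$ literals); $H(r)$ is the head, $B(r)$ the body, $B^+(r)=\{a_{l+1},\ldots,a_m\}$. $M\models r$ iff $M\models B(r)$ implies $M$ contains some atom of $H(r)$. The GL-reduct of $\Pi$ w.r.t. $I$ is $(\mathcal{A},\{H(r)\leftarrow B^+(r)\mid r\in\mathcal{R},\ I\models\neg\ell\text{ for all }\neg\ell\in B(r)\})$. $M$ is an answer set iff $M$ is a model of $\Pi$ and no $M'\subset M$ is a model of $\Pi^M$; $AS(\Pi)$ is the set of answer sets ($\neg\neg\neg a$ is treated as $\neg a$). An epistemic literal is $\mathbf{not}\,\ell$ for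 a literal $\ell$. An ELP is a triple $(\mathcal{A},\mathcal{E},\mathcal{R})$, $\mathcal{E}$ a set of epistemic literals over $\mathcal{A}$, rules $a_1\vee\cdots\vee a_k\leftarrow \ell_1,\ldots,\ell_m,\xi_1,\ldots,\xi_j,\neg\xi_{j+1},\ldots,\neg\xi_n$ with $\xi_i\in\mathcal{E}$. A guess is $\Phi\subseteq\mathcal{E}$. A set $\mathcal{I}$ of interpretations is $\Phi$-compatible w.r.t. $\mathcal{E}$ iff $\mathcal{I}\neq\emptyset$, for each $\mathbf{not}\,\ell\in\Phi$ some $I\in\mathcal{I}$ has $I\not\models\ell$, and for each $\mathbf{not}\,\ell\in\mathcal{E}\setminus\Phi$ all $I\in\mathcal{I}$ satisfy $\ell$. The epistemic reduct $\Pi^\Phi=(\mathcal{A},\mathcal{R}^\Phi)$ replaces each $\mathbf{not}\,\ell\in\Phi$ by $\top$ and every remaining $\mathbf{not}$ by $\neg$. $\mathcal{M}$ is a candidate world view of $\Pi$ iff for some guess $\Phi$, $\mathcal{M}=AS(\Pi^\Phi)$ and $\mathcal{M}$ is $\Phi$-compatible w.r.t. $\mathcal{E}$ (the domain $\mathcal{E}$ of the respective program); $\mathrm{CWV}(\Pi)$ is the set of these. *)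

(* Defs.v *)
From HB Require Import structures.
From mathcomp Require Import all_boot.
Set Implicit Arguments. Unset Strict Implicit. Unset Printing Implicit Defensive.

Section ELP.
Variable A : finType.

(* A literal is an atom a, encoded (true, a), or its default negation ~a,
   encoded (false, a). *)
Definition lit := (bool * A)%type.
Definition LPos (a : A) : lit := (true, a).
Definition LNeg (a : A) : lit := (false, a).

Definition interp := {set A}.

Definition sat_lit (I : interp) (l : lit) : bool :=
  if l.1 then l.2 \in I else l.2 \notin I.

(* Body elements of plain rules: an atom a, a negated literal ~l
   (so ~a and ~~a), and the constants T (top) and ~T (= bottom) that
   arise from the epistemic reduct. *)
Inductive pbody := PAtom of A | PNeg of lit | PTop | PBot.

Record prule := PRule { phead : seq A; pbodies : seq pbody }.
Definition pprog := seq prule.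

Definition sat_pbody (I : interp) (b : pbody) : bool :=
  match b with
  | PAtom a => a \in I
  | PNeg l => ~~ sat_lit I l
  | PTop => true
  | PBot => false
  end.

Definition sat_body (I : interp) (r : prule) : bool :=
  all (sat_pbody I) (pbodies r).

Definition sat_rule (M : interp) (r : prule) : bool :=
  sat_body M r ==> has (fun a => a \in M) (phead r).

Definition models (M : interp) (P : pprog) : bool := all (sat_rule M) P.

Definition bplus (r : prule) : seq A :=
  pmap (fun b => if b is PAtom a then Some a else None) (pbodies r).

Definition neg_ok (I : interp) (b : pbody) : bool :=
  match b with
  | PNeg l => ~~ sat_lit I l
  | PBot => false
  | _ => true
  end.

Definition gl_reduct (P : pprog) (I : interp) : pprog :=
  [seq PRule (phead r) [seq PAtom a | a <- bplus r] |
     r <- P & all (neg_ok I) (pbodies r)].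

Definition is_answer_set (P : pprog) (M : interp) : bool :=
  models M P &&
  [forall M' : {set A}, (M' \proper M) ==> ~~ models M' (gl_reduct P M)].

Definition AS (P : pprog) : {set {set A}} := [set M | is_answer_set P M].

(* An epistemic literal "not l" is represented by the literal l. *)
Record erule := ERule {
  ehead : seq A;
  elits : seq lit;
  epos  : seq lit;        (* xi_1, ..., xi_j   (xi = not l, stored as l) *)
  eneg  : seq lit
}.

(* An ELP (A, E, R): atoms are the type A, E : {set lit}, R : seq erule,
   with every epistemic literal occurring in R belonging to E. *)
Definition wf_elp (E : {set lit}) (R : seq erule) : bool :=
  all (fun r => all (fun x => x \in E) (epos r) &&
                all (fun x => x \in E) (eneg r)) R.

Definition lit_body (l : lit) : pbody :=
  if l.1 then PAtom l.2 else PNeg (LPos l.2).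

(* epistemic reduct w.r.t. guess Phi: not l in Phi becomes T, every other
   not l becomes ~l; hence ~(not l) becomes ~T (bottom) if not l in Phi and
   ~~l otherwise, where ~~~a is read as ~a. *)
Definition red_pos (Phi : {set lit}) (l : lit) : pbody :=
  if l \in Phi then PTop else PNeg l.
Definition red_neg (Phi : {set lit}) (l : lit) : pbody :=
  if l \in Phi then PBot
  else if l.1 then PNeg (LNeg l.2)
  else PNeg (LPos l.2).

Definition ereduct_rule (Phi : {set lit}) (r : erule) : prule :=
  PRule (ehead r)
        ([seq lit_body l | l <- elits r] ++
         [seq red_pos Phi l | l <- epos r] ++
         [seq red_neg Phi l | l <- eneg r]).

Definition ereduct (R : seq erule) (Phi : {set lit}) : pprog :=
  [seq ereduct_rule Phi r | r <- R].

Definition compatible (E Phi : {set lit}) (M : {set {set A}}) : Prop :=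
  M != set0 /\
  (forall l, l \in Phi -> exists2 I, I \in M & ~~ sat_lit I l) /\
  (forall l, l \in E :\: Phi -> forall I, I \in M -> sat_lit I l).

Definition is_cwv (E : {set lit}) (R : seq erule) (M : {set {set A}}) : Prop :=
  exists Phi : {set lit}, Phi \subset E /\ M = AS (ereduct R Phi) /\
                          compatible E Phi M.

End ELP.

(* Main.v *)
Require Import Defs.
From mathcomp Require Import all_boot.

Lemma ereduct_eq {A : finType} {E : {set lit A}} {R : seq (erule A)} {P1 P2 : {set lit A}} :
  wf_elp E R -> {in E, forall x, (x \in P1) = (x \in P2)} -> ereduct R P1 = ereduct R P2.
Proof.
move=> wf H; elim: R wf => [|r R IH] //= /andP[/andP[/allP hp /allP hn] wf].
rewrite IH //; congr cons.
rewrite /ereduct_rule; congr PRule; congr (_ ++ _ ++ _); apply/eq_in_map => x xi.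
  by rewrite /red_pos H //; apply: hp.
by rewrite /red_neg H //; apply: hn.
Qed.

Theorem proposition3 (A : finType) (E E' : {set lit A}) (R : seq (erule A))
    (l : lit A) :
  wf_elp E R -> wf_elp E' R ->
  E \subset E' -> E' :\: E = [set l] ->
  forall M : {set {set A}}, is_cwv E R M <-> is_cwv E' R M.
Proof.
move=> wf wf' sub hl M.
have hlD : l \in E' :\: E by rewrite hl set11.
have lE : l \notin E by move: hlD; rewrite in_setD => /andP[].
have lE' : l \in E' by move: hlD; rewrite in_setD => /andP[].
have onlyl : forall x, x \in E' -> x \notin E -> x = l.
  by move=> x h1 h2; apply/set1P; rewrite -hl in_setD h1 h2.
split.
- case=> Phi [sPhi [hM [ne [c1 c2]]]].
  case: (boolP [exists I in M, ~~ sat_lit I l]) => hex.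
  + exists (l |: Phi); split.
      by rewrite subUset sub1set lE' (subset_trans sPhi sub).
    split.
      rewrite hM; congr AS; apply: (ereduct_eq wf) => x xE.
      rewrite in_setU1; case: eqP => [xl|//]; by rewrite xl (negPf lE) in xE.
    split=> //; split.
      move=> x; rewrite in_setU1 => /orP[/eqP -> | xP]; last exact: c1.
      by case/exists_inP: hex => I IM h; exists I.
    move=> x; rewrite in_setD in_setU1 negb_or => /andP[/andP[xl xP] xE'].
    apply: c2; rewrite in_setD xP /=.
    case: (boolP (x \in E)) => // xE; by rewrite (onlyl x xE' xE) eqxx in xl.
  + exists Phi; split; first exact: (subset_trans sPhi sub).
    split=> //; split=> //; split=> //.
    move=> x; rewrite in_setD => /andP[xP xE'].
    case: (boolP (x \in E)) => xE.
      by apply: c2; rewrite in_setD xP xE.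
    rewrite (onlyl x xE' xE) => I IM.
    apply/negPn; apply: contraNN hex => h; apply/exists_inP; by exists I.
- case=> Phi [sPhi [hM [ne [c1 c2]]]].
  exists (Phi :&: E); split; first exact: subsetIr.
  split.
    rewrite hM; congr AS; apply: (ereduct_eq wf) => x xE; by rewrite in_setI xE andbT.
  split=> //; split.
    move=> x; rewrite in_setI => /andP[xP _]; exact: c1.
  move=> x; rewrite in_setD in_setI => /andP[h xE]; apply: c2.
  rewrite in_setD (subsetP sub x xE) andbT; by rewrite xE andbT in h.
Qed.
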